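(* For $n\ge1$ and $0\le k<n$, \[ a_{n,k}=na_{n-1,k-1}+\frac{n(n-1)}{n-k}a_{n-1,k}, \] and for $n\ge2$ and $0\le k<n$, \[ b_{n,k}=nb_{n-1,k-1}+\frac{n(n-1)}{n-k}b_{n-1,k}. \] For $n\ge1$ and $0\le k\le n$, $a_{n,k}=b_{n,k}+(n-k+1)a_{n,k-1}$. For $n\ge1$, \[ b_{n,n}=na_{n-1,n-1}+\sum_{k=1}^{n-1}\binom{n-1}{k}\,k\,b_{k,k}\,a_{n-k-1,n-k-1}. \]
   Context: Let $A$ be the ring of formal series $\sum_{n\ge0}q_n(y)x^{-n}$, each $q_n$ a complex polynomial of degree at most $n$, with termwise formal derivatives $a_x=-\sum_{n\ge1}nq_n(y)x^{-n-1}$, $a_y=\sum_{n\ge1}q_n'(y)x^{-n}$, and formal logarithm $\log(1+u)=\sum_{k\ge1}(-1)^{k+1}u^k/k$. Let $V\in A$ be the unique solution of $V=1+\frac{y}{x}-\frac{1}{x}V-V_x-\frac{1}{x}V_y+\frac{1}{x}\log V$, and define $P_{n-1},Q_n$ by $V=1+\sum_{n\ge1}P_{n-1}(y)x^{-n}$, $\log V=\sum_{n\ge1}Q_n(y)x^{-n}$. For $n\ge1$ define coefficients $a_{n,k},b_{n,k}$ ($0\le k\le n$) by $P_n(y)=\frac{(-1)^{n+1}}{n!}\sum_{k=0}^n(-1)^ka_{n,k}y^{n-k}$ and $Q_n(y)=\frac{(-1)^{n+1}}{n!}\sum_{k=0}^n(-1)^kb_{n,k}y^{n-k}$. Conventions: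 for $n\ge1$, $a_{n,k}=b_{n,k}=0$ when $k<0$ or $k>n$; and $a_{0,0}=1$, $a_{0,-1}=1$, $a_{0,k}=0$ for other $k$ (so that $P_0(y)=y-1=-\sum_{k=-1}^0(-1)^ka_{0,k}y^{-k}$). *)

(* Defs.v *)
From HB Require Import structures.
From mathcomp Require Import all_boot all_order all_algebra.
From mathcomp Require Import reals.
From mathcomp.real_closed Require Import complex.
Set Implicit Arguments. Unset Strict Implicit. Unset Printing Implicit Defensive.
Import Order.TTheory GRing.Theory Num.Theory.
Local Open Scope ring_scope.

Section Series.
Variable C : fieldType.

(* A formal series  sum_{n>=0} q_n(y) x^{-n}  is represented by n |-> q_n. *)
Definition ser := nat -> {poly C}.

Definition in_A (s : ser) : Prop := forall n, (size (s n) <= n.+1)%N.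

Definition ser_one : ser := fun n => if n is 0 then 1 else 0.
Definition ser_y_over_x : ser := fun n => if n == 1%N then 'X else 0.
Definition ser_add (s t : ser) : ser := fun n => s n + t n.
Definition ser_opp (s : ser) : ser := fun n => - s n.
Definition ser_scale (c : C) (s : ser) : ser := fun n => c *: s n.
Definition ser_mul (s t : ser) : ser :=
  fun n => \sum_(i < n.+1) s i * t (n - i)%N.
Definition ser_pow (s : ser) (k : nat) : ser := iter k (ser_mul s) ser_one.
Definition ser_divx (s : ser) : ser := fun n => if n is m.+1 then s m else 0.
(* a_x = - sum_{n>=1} n q_n x^{-n-1} *)
Definition ser_dx (s : ser) : ser :=
  fun n => if n is m.+1 then - (m%:R *: s m) else 0.
Definition ser_dy (s : ser) : ser := fun n => (s n)^`().
(* log V = log(1 + u) with u = V - 1 = sum_{k>=1} (-1)^{k+1} u^k / k;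
   since u has zero constant term (for V with constant term 1), u^k only
   contributes to coefficients of index >= k, so the sum is finite. *)
Definition ser_log (s : ser) : ser :=
  fun n => \sum_(1 <= k < n.+1)
     (((-1) ^+ k.+1) / k%:R) *: ser_pow (ser_add s (ser_opp ser_one)) k n.

Definition V_equation (V : ser) : Prop :=
  V = ser_add ser_one (ser_add ser_y_over_x (ser_add (ser_opp (ser_divx V))
       (ser_add (ser_opp (ser_dx V)) (ser_add (ser_opp (ser_divx (ser_dy V)))
          (ser_divx (ser_log V)))))).

(* P_{n-1} = coefficient of x^{-n} in V, i.e. P_m = V_{m+1} *)
Definition Ppoly (V : ser) (m : nat) : {poly C} := V m.+1.
Definition Qpoly (V : ser) (n : nat) : {poly C} := ser_log V n.

(* From p_n(y) = (-1)^{n+1}/n! * sum_{k=0}^n (-1)^k c_{n,k} y^{n-k}: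
   c_{n,k} = (-1)^{n+1+k} n! [y^{n-k}] p_n  for 0 <= k <= n, and 0 otherwise. *)
Definition coef_of (p : nat -> {poly C}) (n : nat) (k : int) : C :=
  match k with
  | Posz k' => if (k' <= n)%N then
                 (-1) ^+ (n.+1 + k') * n`!%:R * (p n)`_(n - k')
               else 0
  | Negz _ => 0
  end.

Definition acoef (V : ser) (n : nat) (k : int) : C :=
  if n is 0 then (if (k == 0) || (k == -1) then 1 else 0)
  else coef_of (Ppoly V) n k.

(* b_{n,k} for n >= 1 (b_{0,k} is never used; set to 0) *)
Definition bcoef (V : ser) (n : nat) (k : int) : C :=
  if n is 0 then 0 else coef_of (Qpoly V) n k.

End Series.

(* Main.v *)
Require Import Defs.
From HB Require Import structures.
From mathcomp Require Import all_boot all_order all_algebra.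
From mathcomp Require Import reals.
From mathcomp.real_closed Require Import complex.
From mathcomp Require Import ring lra zify.
Import Order.TTheory GRing.Theory Num.Theory.
Local Open Scope ring_scope.
Local Open Scope complex_scope.
Arguments ser_log : simpl never. Arguments ser_mul : simpl never. Arguments ser_pow : simpl never.
Section Emb.
Variable C : numFieldType.
Local Notation PP := {poly {poly C}}.

Definition TT (K : nat) (s : ser C) : PP := \poly_(i < K) s i.

Lemma coefTT K s i : (TT K s)`_i = if (i < K)%N then s i else 0.
Proof. by rewrite coef_poly. Qed.

Lemma mulTT K (s : ser C) (t : ser C) (q : PP) n :
  (n < K)%N -> (forall m, (m < K)%N -> t m = q`_m) ->
  ser_mul s t n = (TT K s * q)`_n.
Proof.
move=> nK tq; rewrite /ser_mul coefM; apply: eq_bigr => i _.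
have iK : (i < K)%N by apply: leq_ltn_trans nK; rewrite -ltnS.
rewrite coefTT iK tq //; apply: leq_ltn_trans nK; exact: leq_subr.
Qed.

Lemma powTT K s k n : (n < K)%N -> ser_pow s k n = ((TT K s) ^+ k)`_n.
Proof.
elim: k n => [|k IH] n nK.
  by rewrite expr0 coef1 /ser_pow /=; case: n nK.
rewrite exprS /ser_pow iterS -/(ser_pow s k).
apply: mulTT => // m mK; exact: IH.
Qed.

Lemma pow_low (p : PP) k n : p`_0 = 0 -> (n < k)%N -> (p ^+ k)`_n = 0.
Proof.
move=> p0; elim: k n => [|k IH] n // nk.
rewrite exprS coefM big_ord_recl /= p0 mul0r add0r big1 // => i _.
rewrite IH ?mulr0 //=; rewrite /bump /= add1n.
case: i => i /= ilt; lia.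
Qed.
End Emb.
Arguments TT {C}.
Section Deriv.
Variable C : numFieldType.
Local Notation PP := {poly {poly C}}.
Definition cc (a : C) : PP := a%:P%:P.
Lemma ccM a b : cc (a * b) = cc a * cc b. Proof. by rewrite /cc !polyCM. Qed.
Lemma ccN a : cc (- a) = - cc a. Proof. by rewrite /cc !polyCN. Qed.
Lemma cc_nat n : cc n%:R = n%:R. Proof. by rewrite /cc !polyC_natr. Qed.
Lemma cc1 : cc 1 = 1. Proof. by rewrite /cc. Qed.

Variable d : PP -> PP.
Hypothesis dD : forall p q, d (p + q) = d p + d q.
Hypothesis dM : forall p q, d (p * q) = d p * q + p * d q.
Hypothesis dC : forall c : C, d (cc c) = 0.

Lemma d0 : d 0 = 0.
Proof. have := dD 0 0; rewrite addr0 => /(congr1 (fun x => x - d 0)). by rewrite subrr addrK. Qed.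

Lemma dX (q : PP) k : d (q ^+ k.+1) = q ^+ k * d q *+ k.+1.
Proof.
elim: k => [|k IH]; first by rewrite expr1 expr0 mul1r.
by rewrite exprS dM IH exprS; ring.
Qed.

Definition Lg (N : nat) (u : PP) : PP :=
  \sum_(k < N) cc ((-1) ^+ k.+2 / k.+1%:R) * u ^+ k.+1.

Lemma dLg N u : (1 + u) * d (Lg N u) = d u - d u * (- u) ^+ N.
Proof.
elim: N => [|N IH].
  by rewrite /Lg big_ord0 d0 mulr0 expr0 mulr1 subrr.
rewrite /Lg big_ord_recr -/(Lg N u) dD mulrDr IH dM dC mul0r add0r dX.
have -> : cc ((-1) ^+ N.+2 / N.+1%:R) * (u ^+ N * d u *+ N.+1) = (- u) ^+ N * d u.
  have E : cc ((-1) ^+ N.+2 / N.+1%:R) * cc N.+1%:R = (-1) ^+ N.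
    rewrite -ccM divfK ?pnatr_eq0 // !exprS !mulN1r opprK.
    by rewrite /cc rmorphXn /= rmorphN1 rmorphXn /= rmorphN1.
  by rewrite -[u ^+ N * d u *+ N.+1]mulr_natr -cc_nat (exprNn u N) -E; ring.
by rewrite exprSr; ring.
Qed.
End Deriv.
Arguments cc {C}.
Arguments Lg {C}.
Section LogSer.
Variable C : numFieldType.
Local Notation PP := {poly {poly C}}.

Definition Dx (p : PP) : PP := 'X * p^`().
Definition Dy (p : PP) : PP := map_poly (fun q : {poly C} => q^`()) p.

Lemma coefDx p m : (Dx p)`_m = p`_m *+ m.
Proof. by rewrite /Dx coefXM; case: m => [|m] /=; rewrite ?mulr0n ?coef_deriv. Qed.

Lemma coefDy p m : (Dy p)`_m = (p`_m)^`().
Proof. by rewrite /Dy coef_map_id0 // deriv0. Qed.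

Lemma DxD p q : Dx (p + q) = Dx p + Dx q. Proof. by rewrite /Dx derivD mulrDr. Qed.
Lemma DxM p q : Dx (p * q) = Dx p * q + p * Dx q.
Proof. by rewrite /Dx derivM; ring. Qed.
Lemma DxC c : Dx (cc c) = 0. Proof. by rewrite /Dx /cc derivC mulr0. Qed.

Lemma DyD p q : Dy (p + q) = Dy p + Dy q.
Proof. by apply/polyP => i; rewrite coefD !coefDy coefD derivD. Qed.
Lemma DyM p q : Dy (p * q) = Dy p * q + p * Dy q.
Proof.
apply/polyP => i; rewrite coefD !coefDy !coefM linear_sum -big_split /=.
by apply: eq_bigr => j _; rewrite derivM !coefDy.
Qed.
Lemma DyC c : Dy (cc c) = 0.
Proof. by apply/polyP => i; rewrite coefDy /cc !coefC; case: (i == 0%N); rewrite ?derivC ?deriv0. Qed.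

Lemma mul_pow_low (p q : PP) N n : q`_0 = 0 -> (n < N)%N -> (p * q ^+ N)`_n = 0.
Proof.
move=> q0 nN; rewrite coefM big1 // => j _; rewrite pow_low ?mulr0 //.
apply: leq_ltn_trans nN; exact: leq_subr.
Qed.

Variable s : ser C.
Hypothesis s0 : s 0 = 1.
Let u := ser_add s (ser_opp (ser_one C)).

Lemma TTu0 K : (0 < K)%N -> (TT K u)`_0 = 0.
Proof. by move=> K0; rewrite coefTT K0 /u /ser_add /ser_opp /ser_one s0 subrr. Qed.

Lemma TTs K : (0 < K)%N -> 1 + TT K u = TT K s.
Proof.
move=> K0; apply/polyP => i; rewrite coefD coef1 !coefTT /u /ser_add /ser_opp /ser_one.
case: i => [|i] /=; first by rewrite K0 addrC subrK.
by case: (_ < _)%N; rewrite ?add0r ?subr0.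
Qed.

Lemma LgT K N m : (m < K)%N -> (m <= N)%N -> (Lg N (TT K u))`_m = ser_log s m.
Proof.
move=> mK mN; rewrite /Lg coef_sum /ser_log big_add1 /= big_mkord.
rewrite (bigID (fun k : 'I_N => (k < m)%N)) /= [X in _ + X]big1 ?addr0; last first.
  move=> k; rewrite -leqNgt => km; rewrite /cc coefCM pow_low ?mulr0 //.
  exact: TTu0 (leq_ltn_trans _ mK).
rewrite -(big_ord_widen _ (fun k => ((cc ((-1) ^+ k.+2 / k.+1%:R)) * TT K u ^+ k.+1)`_m)) //.
apply: eq_bigr => k _; rewrite /cc coefCM mul_polyC -(@powTT _ _ u k.+1 m mK) //.
Qed.

Lemma FAgen (d : PP -> PP) n :
  (forall p q, d (p + q) = d p + d q) ->
  (forall p q, d (p * q) = d p * q + p * d q) ->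
  (forall c, d (cc c) = 0) ->
  (TT n.+1 s * d (Lg n.+1 (TT n.+1 u)))`_n = (d (TT n.+1 u))`_n.
Proof.
move=> hD hM hC; rewrite -TTs // dLg // coefB mul_pow_low ?subr0 //.
by rewrite coefN TTu0 ?oppr0.
Qed.

Lemma Hu n : u n *+ n = s n *+ n.
Proof. by rewrite /u /ser_add /ser_opp /ser_one; case: n => [|n]; rewrite ?mulr0n ?oppr0 ?addr0. Qed.

Lemma FAx n : \sum_(i < n.+1) s i * (ser_log s (n - i)%N *+ (n - i)) = s n *+ n.
Proof.
have := FAgen Dx n DxD DxM DxC; rewrite coefM coefDx coefTT ltnSn Hu => <-.
apply: eq_bigr => i _; rewrite coefTT ltn_ord coefDx LgT ?ltnS ?leq_subr ?(leq_trans (leq_subr i n) (leqnSn n)) //.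
Qed.

Lemma FAx' n : \sum_(i < n.+1) (ser_log s i *+ i) * s (n - i)%N = s n *+ n.
Proof.
have := FAgen Dx n DxD DxM DxC; rewrite coefMr coefDx coefTT ltnSn Hu => <-.
apply: eq_bigr => i _.
by rewrite coefTT ltnS leq_subr coefDx LgT ?(ltn_ord i) ?(ltnW (ltn_ord i)) // mulrC.
Qed.

Lemma FAy n : \sum_(i < n.+1) s i * (ser_log s (n - i)%N)^`() = (s n)^`().
Proof.
have := FAgen Dy n DyD DyM DyC; rewrite coefM coefDy coefTT ltnSn.
rewrite /u /ser_add /ser_opp derivD derivN /ser_one.
have -> : (if n is 0 then 1 else 0 : {poly C})^`() = 0 by case: n; rewrite ?derivC ?deriv0.
rewrite subr0 => <-.
apply: eq_bigr => i _.
rewrite coefTT ltn_ord coefDy LgT ?ltnS ?leq_subr ?(leq_trans (leq_subr i n) (leqnSn n)) //.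
Qed.
End LogSer.
Arguments FAx {C s}. Arguments FAx' {C s}. Arguments FAy {C s}.
Section Coefs.
Variable C : numFieldType.
Implicit Types p q : nat -> {poly C}.

Lemma cofP p n (k : nat) : (k <= n)%N -> coef_of p n k = (-1) ^+ (n.+1 + k) * n`!%:R * (p n)`_(n - k).
Proof. by move=> kn; rewrite /coef_of kn. Qed.
Lemma cofN p n : coef_of p n (0%:Z - 1) = 0. Proof. by []. Qed.
Lemma cofS p n (k : nat) : coef_of p n (k.+1%:Z - 1) = coef_of p n k.
Proof. by rewrite -addn1 PoszD addrK. Qed.

Lemma sgn_odd m : (-1) ^+ (m.+1 + m) = -1 :> C.
Proof.
elim: m => [|m IH]; first by rewrite expr1.
by rewrite addSn addnS !exprS -exprS IH; ring.
Qed.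

Lemma G1 p m k : (0 < m)%N -> (k < m.+1)%N -> (p m.+1)^`() = (p m)^`() - p m *+ m ->
  (p m)`_m.+1 = 0 ->
  coef_of p m.+1 k = m.+1%:R * coef_of p m (k%:Z - 1)
                     + (m.+1 * (m.+1 - 1))%:R / (m.+1 - k)%:R * coef_of p m k.
Proof.
move=> m0 km hrel htop.
have hc j : (p m.+1)`_j.+1 *+ j.+1 = (p m)`_j.+1 *+ j.+1 - (p m)`_j *+ m.
  by have := congr1 (fun q : {poly C} => q`_j) hrel; rewrite coef_deriv coefB coef_deriv coefMn.
have ha j : (p m.+1)`_j.+1 = ((p m)`_j.+1 *+ j.+1 - (p m)`_j *+ m) / j.+1%:R.
  by rewrite -hc -(mulr_natr ((p m.+1)`_j.+1) j.+1) mulfK // pnatr_eq0.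
rewrite subSS subn0.
case: k km => [|k] km.
  rewrite cofN mulr0 add0r !cofP // !subn0 !addn0 ha htop !exprS factS natrM.
  by field; rewrite addrC natr1 pnatr_eq0.
rewrite ltnS in km; rewrite (cofS p m k) (cofP _ _ _ km) (cofP _ _ _ (ltnW km)) (cofP p m.+1 _ (leqW km)).
have ej : (m - k = (m - k.+1).+1)%N by rewrite subnS prednK // subn_gt0.
rewrite subSS ej ha !addSn !addnS !exprS factS natrM.
by field; rewrite addrC natr1 pnatr_eq0.
Qed.

Lemma G3 p q n k : (k <= n)%N -> q n = p n + (p n)^`() -> (p n)`_n.+1 = 0 ->
  coef_of p n k = coef_of q n k + (n - k + 1)%:R * coef_of p n (k%:Z - 1).
Proof.
move=> kn hq htop.
case: k kn => [|k] kn.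
  by rewrite cofN mulr0 addr0 !cofP // hq subn0 coefD coef_deriv htop mul0rn addr0.
rewrite cofS (cofP _ _ _ kn) (cofP q _ _ kn) (cofP _ _ _ (ltnW kn)) hq coefD coef_deriv.
have ej : (n - k = (n - k.+1).+1)%N by rewrite subnS prednK // subn_gt0.
rewrite ej addn1 !addSn !addnS !exprS; ring.
Qed.
End Coefs.
Section Main.
Variable C : numFieldType.
Variable V : ser C.
Hypothesis hA : in_A V.
Hypothesis hE : V_equation V.
Local Notation L := (ser_log V).

Lemma V0 : V 0 = 1.
Proof.
have := congr1 (fun f => f 0%N) hE; rewrite /ser_add /ser_opp /ser_one /ser_y_over_x /=.
by move=> ->; rewrite !oppr0 !addr0.
Qed.

Lemma FR n : V n.+1 = (if n == 0%N then 'X else 0) + V n *+ n - V n - (V n)^`() + L n.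
Proof.
have := congr1 (fun f => f n.+1) hE.
rewrite /ser_add /ser_opp /ser_one /ser_y_over_x /ser_divx /ser_dx /ser_dy /= eqSS.
move=> ->; rewrite opprK scaler_nat add0r; ring.
Qed.

Lemma L0 : L 0 = 0.
Proof. by rewrite /ser_log big_geq. Qed.

Definition E n := (V n.+1)^`() - (V n)^`() + V n *+ n - V n.
Definition Xc n := (L n.+1)^`() - (L n)^`() + L n *+ n - (if n == 0%N then 1 else 0).

Lemma V1 : V 1 = 'X - 1.
Proof. by rewrite FR /= L0 V0 derivC; ring. Qed.

Lemma L1 : L 1 = V 1.
Proof.
have := FAx V0 1; rewrite big_ord_recr big_ord_recr big_ord0 /= L0 V0.
by rewrite subn0 subnn !mulr0n mulr0 add0r mul1r mulr1n addr0.
Qed.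

Lemma Erec n : E n.+1 = E n *+ n - (E n)^`() + Xc n.
Proof.
rewrite /E /Xc (FR n.+1) (FR n).
rewrite !derivD !derivN !derivMn !derivD !derivN !derivMn.
case: n => [|n] /=; rewrite ?derivX ?derivC ?deriv0;
  move: (V _) (L _) (L _.+1) => a b c; ring.
Qed.

Lemma KEY n : \sum_(i < n.+1) V i * Xc (n - i)%N = E n.
Proof.
have Hy1 := FAy V0 n.+1; rewrite big_ord_recr /= subnn L0 deriv0 mulr0 addr0 in Hy1.
have Hy1' : \sum_(i < n.+1) V i * (L (n - i).+1)^`() = (V n.+1)^`().
  by rewrite -Hy1; apply: eq_bigr => i _; rewrite subSn // -ltnS.
have Hy := FAy V0 n; have Hx := FAx V0 n.
under eq_bigr => i _ do rewrite /Xc mulrBr mulrDr mulrBr.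
rewrite sumrB big_split /= sumrB Hy1' Hy Hx big_ord_recr /= subnn big1 ?add0r ?mulr1 /E //.
move=> i _; rewrite subn_eq0 leqNgt ltn_ord /= mulr0 //.
Qed.

Lemma EX0 n : E n = 0 /\ Xc n = 0.
Proof.
suff H : forall N m, (m <= N)%N -> E m = 0 /\ Xc m = 0 by exact: (H n n).
elim=> [|N IH] m.
  rewrite leqn0 => /eqP ->; rewrite /E /Xc L1 V1 V0 L0 /=.
  by rewrite !derivD !derivN derivX derivC deriv0; split; ring.
rewrite leq_eqVlt => /orP [/eqP ->|]; last by rewrite ltnS; exact: IH.
have EN : E N.+1 = 0 by rewrite Erec; case: (IH N (leqnn N)) => -> ->; rewrite deriv0 mul0rn subr0 addr0.
split => //.
have := KEY N.+1; rewrite EN big_ord_recl /= subn0 V0 mul1r big1 ?addr0 //.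
move=> i _; rewrite /bump /= add1n subSS; case: (IH (N - i)%N (leq_subr _ _)) => _ ->.
by rewrite mulr0.
Qed.
Lemma Crel n : (V n.+1)^`() = (V n)^`() - V n *+ n + V n.
Proof.
have := (EX0 n).1; rewrite /E.
move: (V n.+1)^`() ((V n)^`()) (V n) => a c b H.
by apply/eqP; rewrite -subr_eq0; apply/eqP; rewrite -H; ring.
Qed.

Lemma Brel n : (0 < n)%N -> L n = V n.+1 + (V n.+1)^`().
Proof.
move=> n0; rewrite Crel (FR n); case: n n0 => // n _ /=.
by move: (V n.+1) (L n.+1) ((V n.+1)^`()) => a b c; ring.
Qed.

Lemma Lrel n : (0 < n)%N -> (L n.+1)^`() = (L n)^`() - L n *+ n.
Proof.
move=> n0; have := (EX0 n).2; rewrite /Xc; case: n n0 => // n _ /=; rewrite subr0.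
move: (L n.+2)^`() ((L n.+1)^`()) (L n.+1) => a c b H.
by apply/eqP; rewrite -subr_eq0; apply/eqP; rewrite -H; ring.
Qed.

Lemma size_Mn (p : {poly C}) k : (size (p *+ k) <= size p)%N.
Proof. by rewrite -scaler_nat size_scale_leq. Qed.

Lemma degL n : (size (L n) <= n.+1)%N.
Proof.
elim: n {-2}n (leqnn n) => [|N IH] n.
  by rewrite leqn0 => /eqP ->; rewrite L0 size_poly0.
case: n => [|n]; first by rewrite L0 size_poly0.
rewrite ltnS => nN.
have := FAx V0 n.+1; rewrite big_ord_recl /= subn0 V0 mul1r => /(canRL (addrK _)) H.
have -> : L n.+1 = (n.+1%:R)^-1 *: (L n.+1 *+ n.+1).
  by rewrite -scaler_nat scalerA mulVf ?pnatr_eq0 // scale1r.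
apply: leq_trans (size_scale_leq _ _) _; rewrite H.
apply: leq_trans (size_polyD _ _) _; rewrite geq_max (leq_trans (size_Mn _ _) (hA _)) /=.
rewrite size_polyN; apply: (big_ind (fun p : {poly C} => (size p <= n.+2)%N)) => //.
- by rewrite size_poly0.
- by move=> x y hx hy; apply: leq_trans (size_polyD _ _) _; rewrite geq_max hx hy.
move=> i _; apply: leq_trans (size_polyMleq _ _) _.
have h1 := hA (bump 0 i); have h2 : (size (L (n.+1 - bump 0 i)%N *+ (n.+1 - bump 0 i)) <= (n.+1 - bump 0 i).+1)%N.
  apply: leq_trans (size_Mn _ _) _; apply: IH; rewrite /bump /= add1n subSS; apply: leq_trans nN; exact: leq_subr.
move: (leq_add h1 h2); case: i h1 h2 => i /= ilt _ _; rewrite /bump /= add1n.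
move: (size _) (size _) => a b; lia.
Qed.

Lemma topV n : (0 < n)%N -> (V n.+1)`_n.+1 = 0.
Proof.
move=> n0; rewrite (FR n); case: n n0 => // n _ /=.
rewrite !coefD !coefN coefMn coef0 coef_deriv.
have h1 : (V n.+1)`_n.+2 = 0 by apply: nth_default; exact: hA.
have h2 : (V n.+1)`_n.+3 = 0 by apply: nth_default; apply: leq_trans (hA _) _.
have h3 : (L n.+1)`_n.+2 = 0 by apply: nth_default; exact: degL.
by rewrite h1 h2 h3 mul0rn; ring.
Qed.

Lemma V2 : (V 2)`_1 = 1.
Proof.
have := congr1 (fun p : {poly C} => p`_0) (Crel 1); rewrite coef_deriv V1 /= mulr1n => ->.
by rewrite mulr1n subrK derivB derivX derivC subr0 coef1.
Qed.
Lemma aP n k : acoef V n.+1 k = coef_of (Ppoly V) n.+1 k. Proof. by []. Qed.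
Lemma bP n k : bcoef V n.+1 k = coef_of (Qpoly V) n.+1 k. Proof. by []. Qed.

Lemma acoef_diag j : acoef V j j = - j`!%:R * (V j.+1)`_0.
Proof.
case: j => [|j].
  have -> : acoef V 0 0 = 1 by [].
  by rewrite V1 coefB coefX coef1 /= factE /=; ring.
rewrite aP cofP // subnn sgn_odd /Ppoly; ring.
Qed.

Lemma bcoef_diag j : (0 < j)%N -> bcoef V j j = - j`!%:R * (L j)`_0.
Proof.
case: j => [|j] // _; rewrite bP cofP // subnn sgn_odd /Qpoly; ring.
Qed.

Lemma main_gen :
  [/\ (forall n k : nat, (1 <= n)%N -> (k < n)%N ->
         acoef V n k = n%:R * acoef V n.-1 (k%:Z - 1)
                       + (n * (n - 1))%:R / (n - k)%:R * acoef V n.-1 k),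
      (forall n k : nat, (2 <= n)%N -> (k < n)%N ->
         bcoef V n k = n%:R * bcoef V n.-1 (k%:Z - 1)
                       + (n * (n - 1))%:R / (n - k)%:R * bcoef V n.-1 k),
      (forall n k : nat, (1 <= n)%N -> (k <= n)%N ->
         acoef V n k = bcoef V n k + (n - k + 1)%:R * acoef V n (k%:Z - 1)) &
      (forall n : nat, (1 <= n)%N ->
         bcoef V n n = n%:R * acoef V n.-1 n.-1
           + \sum_(1 <= k < n) 'C(n - 1, k)%:R * k%:R * bcoef V k k
                                * acoef V (n - k - 1) (n - k - 1)%N)].
Proof.
split.
- move=> [|[|m]] k // _ kn.
    case: k kn => // _; rewrite aP cofP // /Ppoly V2 addn0 subnn muln0 subn0 /= !mul0r addr0 factS fact0 expr2; ring.
  rewrite [m.+2.-1]/= !aP; apply: G1 => //.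
    rewrite /Ppoly Crel mulrSr; move: (V m.+2) ((V m.+2)^`()) => a b; ring.
  exact: topV.
- move=> [|[|m]] k // _ kn.
  rewrite [m.+2.-1]/= !bP; apply: G1 => //.
    exact: Lrel.
  by rewrite /Qpoly; apply: nth_default; exact: degL.
- move=> [|m] k // _ kn.
  rewrite !aP bP; apply: G3 => //.
    exact: Brel.
  exact: topV.
- move=> [|m] // _.
  pose f i := ((L i)`_0 *+ i) * (V (m.+1 - i)%N)`_0.
  have H0 : \sum_(i < m.+2) f i = (V m.+1)`_0 *+ m.+1.
    rewrite -coefMn -(FAx' V0 m.+1) coef_sum; apply: eq_bigr => i _.
    by rewrite coef0M coefMn.
  rewrite big_ord_recr big_ord_recl /= in H0.
  have Hf0 : f 0%N = 0 by rewrite /f mulr0n mul0r.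
  have Hfm : f m.+1 = (L m.+1)`_0 *+ m.+1 by rewrite /f subnn V0 coef1 mulr1.
  have Hs : \sum_(i < m) f (bump 0 (widen_ord (leqnSn m) i)) = \sum_(i < m) f i.+1.
    by apply: eq_bigr => i _; rewrite /bump /= add1n.
  rewrite Hf0 Hfm Hs add0r in H0.
  rewrite bcoef_diag // [m.+1.-1]/= acoef_diag big_add1 /= big_mkord.
  have -> : \sum_(i < m) 'C(m.+1 - 1, i.+1)%:R * i.+1%:R * bcoef V i.+1 i.+1
        * acoef V (m.+1 - i.+1 - 1)%N (m.+1 - i.+1 - 1)%N = m`!%:R * \sum_(i < m) f i.+1.
    rewrite mulr_sumr; apply: eq_bigr => i _.
    have im : (i < m)%N := ltn_ord i.
    have e1 : (m.+1 - i.+1 - 1 = m - i.+1)%N by lia.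
    have e2 : ((m - i.+1).+1 = m.+1 - i.+1)%N by lia.
    rewrite e1 bcoef_diag // acoef_diag e2 subSS subn0 /f.
    rewrite -(bin_fact im) !natrM.
    move: ((L i.+1)`_0) ((V (m.+1 - i.+1)%N)`_0) => a b; ring.
  have -> : \sum_(i < m) f i.+1 = (V m.+1)`_0 *+ m.+1 - (L m.+1)`_0 *+ m.+1.
    by rewrite -H0 addrK.
  rewrite factS natrM; move: ((L m.+1)`_0) ((V m.+1)`_0) => a b; ring.
Qed.
End Main.

Theorem theorem4p8 (R : realType) (V : ser R[i]) :
  in_A V -> V_equation V ->
  [/\ (forall n k : nat, (1 <= n)%N -> (k < n)%N ->
         acoef V n k = n%:R * acoef V n.-1 (k%:Z - 1)
                       + (n * (n - 1))%:R / (n - k)%:R * acoef V n.-1 k),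
      (forall n k : nat, (2 <= n)%N -> (k < n)%N ->
         bcoef V n k = n%:R * bcoef V n.-1 (k%:Z - 1)
                       + (n * (n - 1))%:R / (n - k)%:R * bcoef V n.-1 k),
      (forall n k : nat, (1 <= n)%N -> (k <= n)%N ->
         acoef V n k = bcoef V n k + (n - k + 1)%:R * acoef V n (k%:Z - 1)) &
      (forall n : nat, (1 <= n)%N ->
         bcoef V n n = n%:R * acoef V n.-1 n.-1
           + \sum_(1 <= k < n) 'C(n - 1, k)%:R * k%:R * bcoef V k k
                                * acoef V (n - k - 1) (n - k - 1)%N)].
Proof.
move=> hA hE; exact: (@main_gen R[i] V hA hE).
Qed.
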